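(* (Manipulation Resistance.) In the ASAS-BridgeAMM protocol described in the context, an adversary $\mathcal{A}$ controlling the relayer and manipulating the oracle price by a relative amount $\delta$ can extract profit $\Pi_{\mathcal{A}}$ bounded by $\Pi_{\mathcal{A}} \le \delta\cdot V_{swap} + s_{\max}\cdot V_{pool}$.
   Context: ASAS-BridgeAMM is a cross-chain bridge whose destination-chain settlement is a constant-product AMM with reserve $x$ of the input asset. A Byzantine relayer may delay, reorder, censor or front-run cross-chain messages (but cannot forge consensus signatures). The adversary's actions are: manipulate the oracle price by relative amount $\delta$, delay a message by latency $\tau$, and execute a swap of size $V$ (denoted $V_{swap}$). The adversary's profit is $\Pi(\delta,\tau,V)=\delta V - s(V)V - h(\tau)V$, where $s(V)=V/(x+V)$ is the slippage and $h(\tau)\in[h_{\min},h_{\max}]$ is the latency-dependent haircut ($h(\tau)=h_{\min}$ for $\tau\le T_{\min}$, linear between $T_{\min}$ and $T_{\max}$, $h_{\max}$ for $\tau\ge T_{\max}$; implementation $h_{\min}=0.3\%$, $h_{\max}=5\%$, $T_{\max}=\tau_{\max}=30$ min). Swaps revert if slippage exceeds the maximum slippage bound $s_{\max}$ (implementation: $10\%$). A circuit breaker halts the protocol (swap reverts, profit $0$) if the price deviation $\delta\ge\theta_{price}=0.5$ or the latency $\tau>2\tau_{\max}$. $V_{pool}$ denotes the pool value. *)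

(* Defs.v *)
From Stdlib Require Import Reals Lra.
Open Scope R_scope.

(* Implementation parameters of ASAS-BridgeAMM (time in minutes). *)
Definition h_min : R := 3 / 1000.
Definition h_max : R := 5 / 100.
Definition tau_max : R := 30.
Definition T_max : R := tau_max.
Definition s_max : R := 1 / 10.
Definition theta_price : R := 1 / 2.

(* Constant-product AMM slippage for a swap of size V against reserve x. *)
Definition slippage (x V : R) : R := V / (x + V).

Definition haircut (T_min tau : R) : R :=
  if Rle_dec tau T_min then h_min
  else if Rle_dec T_max tau then h_max
  else h_min + (h_max - h_min) * (tau - T_min) / (T_max - T_min).

Definition raw_profit (x T_min delta tau V : R) : R :=
  delta * V - slippage x V * V - haircut T_min tau * V.

(* Realised adversarial profit: 0 if the circuit breaker halts the protocol
   or the swap reverts because slippage exceeds s_max; otherwise raw profit. *)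
Definition adv_profit (x T_min delta tau V : R) : R :=
  if Rle_dec theta_price delta then 0
  else if Rlt_dec (2 * tau_max) tau then 0
  else if Rlt_dec s_max (slippage x V) then 0
  else raw_profit x T_min delta tau V.

(* Main.v *)
Require Import Defs.
From Stdlib Require Import Reals Lra.
Open Scope R_scope.

Lemma haircut_nonneg T_min tau : T_min < T_max -> 0 <= haircut T_min tau.
Proof.
  intros H. unfold haircut, h_min, h_max.
  destruct (Rle_dec tau T_min); [lra|].
  destruct (Rle_dec T_max tau); [lra|].
  assert (0 <= (5/100 - 3/1000) * (tau - T_min) / (T_max - T_min)).
  { unfold Rdiv. apply Rmult_le_pos. apply Rmult_le_pos; lra.
    left. apply Rinv_0_lt_compat. lra. }
  lra.
Qed.

Lemma slippage_nonneg x V : 0 < x -> 0 <= V -> 0 <= slippage x V.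
Proof.
  intros. unfold slippage, Rdiv. apply Rmult_le_pos; [lra|].
  left. apply Rinv_0_lt_compat. lra.
Qed.

Theorem theorem3 :
  forall (x V_pool T_min delta tau V_swap : R),
    0 < x -> 0 <= V_pool ->
    0 <= T_min -> T_min < T_max ->
    0 <= delta -> 0 <= tau -> 0 <= V_swap ->
    adv_profit x T_min delta tau V_swap <= delta * V_swap + s_max * V_pool.
Proof.
  intros x Vp Tm d tau V Hx Hp HT HTm Hd Ht HV.
  assert (0 <= s_max * Vp) by (unfold s_max; nra).
  assert (0 <= d * V) by nra.
  pose proof (haircut_nonneg Tm tau HTm).
  pose proof (slippage_nonneg x V Hx HV).
  unfold adv_profit, raw_profit.
  destruct (Rle_dec theta_price d); [lra|].
  destruct (Rlt_dec (2 * tau_max) tau); [lra|].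
  destruct (Rlt_dec s_max (slippage x V)); [lra|].
  nra.
Qed.
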